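(* Let $\lambda^1,\dots,\lambda^M$ be loss functions such that each $\lambda^m$ is proper and $\eta^m$-mixable for some $\eta^m>0$. Consider the multiobjective game with $N$ experts: $L_0^{(m)}:=0$, $L_0^{n,m}:=0$; at each step $t=1,2,\dots$, each Expert $n$ announces $\gamma_t^n\in[0,1]$, Learner announces $\pi_t\in[0,1]$, Reality announces $\omega_t\in\{0,1\}$, and $L_t^{(m)}:=L_{t-1}^{(m)}+\lambda^m(\pi_t,\omega_t)$, $L_t^{n,m}:=L_{t-1}^{n,m}+\lambda^m(\gamma_t^n,\omega_t)$ for all $n,m$. If Learner follows the defensive forecasting algorithm (described in the context), then for all $t$, all $n=1,\dots,N$ and all $m=1,\dots,M$, $$L_t^{(m)}\le L_t^{n,m}+\frac{\ln(MN)}{\eta^m}.$$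
   Context: A loss function is a map $\lambda:[0,1]\times\{0,1\}\to[0,\infty]$ satisfying: (1) $\lambda(\gamma,0)$, $\lambda(\gamma,1)$ continuous in $\gamma\in[0,1]$ (standard topology on $[0,\infty]$); (2) some $\gamma$ has both values finite; (3) no $\gamma$ has both values infinite. Superprediction set: $\Sigma_\lambda=\{(x,y)\in[0,\infty)^2:\exists\gamma\ \lambda(\gamma,0)\le x,\ \lambda(\gamma,1)\le y\}$. $\lambda$ is $\eta$-mixable ($\eta>0$) if $\{(e^{-\eta x},e^{-\eta y}):(x,y)\in\Sigma_\lambda\}$ is convex; proper if $\pi\lambda(\pi,1)+(1-\pi)\lambda(\pi,0)\le\pi\lambda(\pi',1)+(1-\pi)\lambda(\pi',0)$ for all $\pi,\pi'\in[0,1]$. Defensive forecasting algorithm (in this setting): for each pair $(n,m)$ define, after step $t$, $Q^{n,m}_t:=\prod_{s=1}^t\exp\bigl(\eta^m(\lambda^m(\pi_s,\omega_s)-\lambda^m(\gamma_s^n,\omega_s))\bigr)$ (with $Q^{n,m}_0=1$), and $Q_t:=\frac{1}{MN}\sum_{n,m}Q^{n,m}_t$. At step $t$, after reading $\gamma_t^1,\dots,\gamma_t^N$, let $f_t(\pi,\omega)$ be the value $Q_t$ would take if $\pi_t=\pi$ and $\omega_t=\omega$, minus $Q_{t-1}$ (with $\infty-\infty:=0$). If $f_t(0,1)\le0$ predict $\pi_t:=0$; else if $f_t(1,0)\le0$ predict $\pi_t:=1$; otherwise predict any $\pi_t=\pi$ satisfying $f_t(\pi,0)=f_t(\pi,1)$.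 *)

(* Defs.v *)
From HB Require Import structures.
From mathcomp Require Import all_boot all_order all_algebra.
From mathcomp Require Import all_classical all_reals all_analysis.
Set Implicit Arguments. Unset Strict Implicit. Unset Printing Implicit Defensive.
Import Order.TTheory GRing.Theory Num.Theory.
Local Open Scope classical_set_scope.
Local Open Scope ring_scope.

(* Outcomes omega in {0,1} are encoded as bool: false = 0, true = 1.
   A loss function is lam : R -> bool -> \bar R; only its values on [0,1]
   matter. *)

Section Defs.
Variable R : realType.

Definition is_loss (lam : R -> bool -> \bar R) : Prop :=
  (forall g w, 0 <= g <= 1 -> (0 <= lam g w)%E) /\
  (forall w, {within `[0, 1], continuous (fun g => lam g w)}) /\
  (exists g, 0 <= g <= 1 /\ (lam g false < +oo)%E /\ (lam g true < +oo)%E) /\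
  (forall g, 0 <= g <= 1 -> ~ (lam g false = +oo /\ lam g true = +oo)%E).

Definition superpred (lam : R -> bool -> \bar R) : set (R * R) :=
  [set p | 0 <= p.1 /\ 0 <= p.2 /\
     exists g, 0 <= g <= 1 /\ (lam g false <= p.1%:E)%E /\
               (lam g true <= p.2%:E)%E].

Definition convex2 (S : set (R * R)) : Prop :=
  forall a b, S a -> S b -> forall t, 0 <= t <= 1 ->
    S (t * a.1 + (1 - t) * b.1, t * a.2 + (1 - t) * b.2).

Definition mixable_loss (eta : R) (lam : R -> bool -> \bar R) : Prop :=
  convex2 [set q | exists p, superpred lam p /\
                     q = (expR (- (eta * p.1)), expR (- (eta * p.2)))].

(* Properness, with the usual convention 0 * +oo = 0 of \bar R. *)
Definition proper_loss (lam : R -> bool -> \bar R) : Prop :=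
  forall p p', 0 <= p <= 1 -> 0 <= p' <= 1 ->
    (p%:E * lam p true + (1 - p)%:E * lam p false <=
     p%:E * lam p' true + (1 - p)%:E * lam p' false)%E.

Definition subE0 (x y : \bar R) : \bar R :=
  if (x == +oo%E) && (y == +oo%E) then 0%E else (x - y)%E.

Variables (N M : nat) (lam : 'I_M -> R -> bool -> \bar R) (eta : 'I_M -> R)
          (gam : nat -> 'I_N -> R).

Fixpoint Qnm (pi : nat -> R) (om : nat -> bool) (n : 'I_N) (m : 'I_M) (t : nat)
  : \bar R :=
  match t with
  | 0 => 1%E
  | t'.+1 => (Qnm pi om n m t' *
              expeR ((eta m)%:E *
                     subE0 (lam m (pi t) (om t)) (lam m (gam t n) (om t))))%E
  end.

Definition Qtot (pi : nat -> R) (om : nat -> bool) (t : nat) : \bar R :=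
  (((M * N)%:R)^-1%:E * \sum_(n < N) \sum_(m < M) Qnm pi om n m t)%E.

(* f_t(p, w): the value Q_t would take if pi_t = p and om_t = w, minus Q_{t-1}. *)
Definition fdef (pi : nat -> R) (om : nat -> bool) (t : nat) (p : R) (w : bool)
  : \bar R :=
  subE0 (Qtot (fun s => if s == t then p else pi s)
              (fun s => if s == t then w else om s) t)
        (Qtot pi om t.-1).

Definition follows_DF (pi : nat -> R) (om : nat -> bool) (t : nat) : Prop :=
  0 <= pi t <= 1 /\
  (if (fdef pi om t 0 true <= 0)%E then pi t = 0
   else if (fdef pi om t 1 false <= 0)%E then pi t = 1
   else fdef pi om t (pi t) false = fdef pi om t (pi t) true).

Definition Llearner (pi : nat -> R) (om : nat -> bool) (m : 'I_M) (t : nat)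
  : \bar R := (\sum_(1 <= s < t.+1) lam m (pi s) (om s))%E.

Definition Lexpert (om : nat -> bool) (n : 'I_N) (m : 'I_M) (t : nat)
  : \bar R := (\sum_(1 <= s < t.+1) lam m (gam s n) (om s))%E.

End Defs.

(* Main.v *)
Require Import Defs.
From HB Require Import structures.
From mathcomp Require Import all_boot all_order all_algebra.
From mathcomp Require Import all_classical all_reals all_analysis.
From mathcomp Require Import ring lra.
Import Order.TTheory GRing.Theory Num.Theory.
Local Open Scope ring_scope.

Lemma near_interior (R : realType) (f : R -> \bar R) (g : R) (th : \bar R) :
  {within `[0, 1], continuous f}%classic -> 0 <= g <= 1 -> (f g < th)%E ->
  exists g1, 0 < g1 < 1 /\ (f g1 < th)%E.
Proof.
move=> cf g01 fgth.
have gin : g \in `[0, 1]%classic by apply: mem_set; rewrite /= in_itv.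
move: cf; rewrite continuous_subspace_in => /(_ g gin) cf.
have : nbhs (f g) [set y | (y < th)%E]%classic.
  by apply: open_nbhs_nbhs; split; [exact: open_ereal_lt_ereal|].
move=> /cf H.
have {H} : nbhs (g : subspace `[0, 1]%classic) (fun x => (f x < th)%E) by exact: H.
move/nbhs_subspace_ex => /(_ (set_mem gin)) [V /nbhs_ballP [e /= e0 HV] HUV].
have He : forall y : R, `|g - y| < e -> `[0, 1]%classic y -> (f y < th)%E.
  move=> y gy Ay.
  have : (V `&` `[0, 1]%classic)%classic y by split => //; apply: HV; exact: gy.
  by rewrite -HUV => -[].
pose d := Num.min e 1.
have d0 : 0 < d by rewrite lt_min e0 ltr01.
have de : d <= e by rewrite ge_min lexx.
have d1 : d <= 1 by rewrite ge_min lexx orbT.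
exists ((1 - d) * g + d / 2).
case/andP: g01 => g0 g1.
have H1 : 0 < (1 - d) * g + d / 2 < 1 by apply/andP; split; nra.
split => //; apply: He.
- rewrite /ball /= -normrN.
  have -> : - (g - ((1 - d) * g + d / 2)) = d * (1/2 - g) by ring.
  rewrite normrM ger0_norm; last by lra.
  have : `|1/2 - g| <= 1/2 by rewrite ler_norml; apply/andP; split; lra.
  nra.
- by rewrite /= in_itv /=; apply/andP; split; lra.
Qed.


Lemma loss_fin (R : realType) (l : R -> bool -> \bar R) :
  is_loss l -> proper_loss l -> forall p w, 0 <= p <= 1 ->
  (if w then 0 < p else p < 1) -> l p w \is a fin_num.
Proof.
move=> [l0 [_ [[g [g01 [gf gt]]] _]]] pr p w p01 hw.
have := pr p g p01 g01.
have hpf := l0 p false p01; have hpt := l0 p true p01.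
have hgf := l0 g false g01; have hgt := l0 g true g01.
move: gf gt hgf hgt.
case: (l g false) => [r0| |] //; case: (l g true) => [r1| |] // _ _ hr0 hr1.
case/andP: p01 => p0 p1.
rewrite -!EFinM -EFinD.
have ne : forall x : \bar R, (0%R <= x)%E -> x != -oo%E by move=> [x| |].
have q0 : (0%R <= (1 - p)%:E)%E by rewrite lee_fin subr_ge0.
have pE : (0%R <= p%:E)%E by rewrite lee_fin.
case: w hw => hp.
  move: hpt hpf.
  case: (l p true) => [r| |] // _ hs.
  by rewrite gt0_muley ?lte_fin // addye ?leye_eq // ne // mule_ge0.
move: hpt hpf.
case: (l p false) => [r| |] // ht hs.
by rewrite (gt0_muley (x:=(1-p)%:E)) ?lte_fin ?subr_gt0 // addey ?leye_eq // ne // mule_ge0.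
Qed.


Lemma ln_lb (R : realType) (U Z : R) : 0 < U -> 0 < Z -> 1 - U / Z <= ln Z - ln U.
Proof.
move=> U0 Z0.
have := expR_ge1Dx (ln U - ln Z).
rewrite expRD expRN !lnK ?posrE //.
lra.
Qed.

Lemma inv_bound (R : realType) (z : R) : -1/2 <= z -> z - 2 * z ^+ 2 <= 1 - (1 + z)^-1.
Proof.
move=> hz.
have z1 : 0 < 1 + z by lra.
have hw : (1 + z)^-1 * (1 + z) = 1 by rewrite mulVf // gt_eqF.
set w := (1 + z)^-1 in hw *.
have key : (1 - w - (z - 2 * z ^+ 2)) * (1 + z) = z ^+ 2 * (1 + 2 * z).
  have -> : (1 - w - (z - 2 * z ^+ 2)) * (1 + z) = (1 + z) - w * (1 + z) - (z - 2 * z^+2) * (1 + z) by ring.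
  rewrite hw; ring.
have : 0 <= (1 - w - (z - 2 * z ^+ 2)) * (1 + z).
  rewrite key; apply: mulr_ge0; [exact: sqr_ge0|lra].
rewrite pmulr_lge0 //; lra.
Qed.

Lemma core_B (R : realType) (l : R -> bool -> \bar R) (eta p u v : R) :
  is_loss l -> proper_loss l -> mixable_loss eta l -> 0 < eta -> 0 < p < 1 ->
  l p false = u%:E -> l p true = v%:E ->
  forall x y, superpred l (x, y) ->
  (1 - p) * expR (eta * (u - x)) + p * expR (eta * (v - y)) <= 1.
Proof.
move=> [l0 _] pr mix eta0 /andP[p0 p1] hu hv x y sp.
have p01 : 0 <= p <= 1 by apply/andP; split; lra.
have u0 : 0 <= u by rewrite -lee_fin -hu; exact: l0.
have v0 : 0 <= v by rewrite -lee_fin -hv; exact: l0.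
set U := expR (- (eta * u)); set V := expR (- (eta * v)).
set A := expR (- (eta * x)); set B := expR (- (eta * y)).
have U0 : 0 < U by exact: expR_gt0.
have V0 : 0 < V by exact: expR_gt0.
have A0 : 0 < A by exact: expR_gt0.
have B0 : 0 < B by exact: expR_gt0.
have eAU : expR (eta * (u - x)) = A / U.
  by rewrite /A /U -expRN opprK -expRD; congr expR; ring.
have eBV : expR (eta * (v - y)) = B / V.
  by rewrite /B /V -expRN opprK -expRD; congr expR; ring.
rewrite eAU eBV.
set a := A / U - 1; set b := B / V - 1.
have -> : A / U = 1 + a by rewrite /a; ring.
have -> : B / V = 1 + b by rewrite /b; ring.
have a1 : -1 < a.
  have : 0 < A / U by exact: divr_gt0.
  rewrite /a; lra.
have b1 : -1 < b.
  have : 0 < B / V by exact: divr_gt0.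
  rewrite /b; lra.
rewrite leNgt; apply/negP => H.
set D := (1 - p) * a + p * b.
have D0 : 0 < D by rewrite /D; lra.
set K := 1 + a ^+ 2 + b ^+ 2.
have K0 : 0 < K by rewrite /K; have := sqr_ge0 a; have := sqr_ge0 b; lra.
have DK : D <= K / 2.
  rewrite /D /K.
  have ha : a <= (1 + a ^+ 2) / 2 by have := sqr_ge0 (a - 1); rewrite sqrrB1; lra.
  have hb : b <= (1 + b ^+ 2) / 2 by have := sqr_ge0 (b - 1); rewrite sqrrB1; lra.
  nra.
set t := D / (4 * K).
have tK : t * (4 * K) = D by rewrite /t mulfVK // mulf_neq0 // ?gt_eqF.
have t0 : 0 < t by rewrite /t divr_gt0 // mulr_gt0.
have t18 : t <= 1/8 by nra.
have t01 : 0 <= t <= 1 by apply/andP; split; lra.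
have SA : [set q | exists p0, superpred l p0 /\
            q = (expR (- (eta * p0.1)), expR (- (eta * p0.2)))]%classic (A, B).
  by exists (x, y).
have SU : [set q | exists p0, superpred l p0 /\
            q = (expR (- (eta * p0.1)), expR (- (eta * p0.2)))]%classic (U, V).
  exists (u, v); split => //; split => //; split => //.
  by exists p; split => //; rewrite hu hv.
have [[x' y'] [[/= x'0 [y'0 [g' [g'01 [hgf hgt]]]]] [/= eZ1 eZ2]]] := mix _ _ SA SU t t01.
set Z1 := t * A + (1 - t) * U in eZ1.
set Z2 := t * B + (1 - t) * V in eZ2.
have Hpr : p * v + (1 - p) * u <= p * y' + (1 - p) * x'.
  have := pr p g' p01 g'01; rewrite hu hv => h.
  rewrite -lee_fin !EFinD !EFinM; apply: (le_trans h).
  apply: leeD; apply: lee_wpmul2l => //; rewrite lee_fin; lra.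
have lZ1 : ln Z1 = - (eta * x') by rewrite eZ1 expRK.
have lZ2 : ln Z2 = - (eta * y') by rewrite eZ2 expRK.
have lU : ln U = - (eta * u) by rewrite /U expRK.
have lV : ln V = - (eta * v) by rewrite /V expRK.
have Z10 : 0 < Z1 by rewrite eZ1 expR_gt0.
have Z20 : 0 < Z2 by rewrite eZ2 expR_gt0.
have H1 : p * (ln Z2 - ln V) + (1 - p) * (ln Z1 - ln U) <= 0.
  rewrite lZ1 lZ2 lU lV.
  have := ler_wpM2l (ltW eta0) Hpr. nra.
have rZ1 : U / Z1 = (1 + t * a)^-1.
  rewrite -[U / Z1]invf_div; congr (_^-1).
  by rewrite /Z1 /a; field; rewrite gt_eqF.
have rZ2 : V / Z2 = (1 + t * b)^-1.
  rewrite -[V / Z2]invf_div; congr (_^-1).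
  by rewrite /Z2 /b; field; rewrite gt_eqF.
have H2 : t * a - 2 * (t * a) ^+ 2 <= ln Z1 - ln U.
  apply: le_trans (@ln_lb _ U Z1 U0 Z10); rewrite rZ1; apply: inv_bound; nra.
have H3 : t * b - 2 * (t * b) ^+ 2 <= ln Z2 - ln V.
  apply: (le_trans _ (@ln_lb _ V Z2 V0 Z20)); rewrite rZ2; apply: inv_bound; nra.
have H4 : p * (t * b - 2 * (t * b) ^+ 2) + (1 - p) * (t * a - 2 * (t * a) ^+ 2) <= 0.
  apply: (le_trans _ H1); apply: lerD; apply: ler_wpM2l => //; lra.
have H5 : 2 * t ^+ 2 * (p * b ^+ 2 + (1 - p) * a ^+ 2) <= t * D / 2.
  have : p * b ^+ 2 + (1 - p) * a ^+ 2 <= K.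
    rewrite /K; have := sqr_ge0 a; have := sqr_ge0 b; nra.
  have : 0 <= 2 * t ^+ 2 by have := sqr_ge0 t; lra.
  rewrite -tK; nra.
have : p * (t * b - 2 * (t * b) ^+ 2) + (1 - p) * (t * a - 2 * (t * a) ^+ 2)
       = t * D - 2 * t ^+ 2 * (p * b ^+ 2 + (1 - p) * a ^+ 2) by rewrite /D; ring.
have : 0 < t * D by exact: mulr_gt0.
lra.
Qed.


Lemma thresh (R : realType) (eta q c x : R) : 0 < eta -> 0 < q ->
  (q * expR (eta * (c - x)) <= 1) = (c + ln q / eta <= x).
Proof.
move=> eta0 q0.
have -> : (q * expR (eta * (c - x)) <= 1) = (eta * (c - x) <= - ln q).
  have eq : q^-1 = expR (- ln q) by rewrite expRN lnK ?posrE.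
  by rewrite -(ler_pdivlMl _ _ q0) mulr1 eq ler_expR.
have -> : (c + ln q / eta <= x) = (ln q <= (x - c) * eta).
  by rewrite -ler_pdivrMr // -lerBrDl.
by apply/idP/idP => h; lra.
Qed.

Lemma lower_bound (R : realType) (l : R -> bool -> \bar R) (eta q c : R) (w : bool) :
  is_loss l -> proper_loss l -> 0 < eta -> 0 < q ->
  (forall x y, superpred l (x, y) ->
     q * expR (eta * (c - (if w then y else x))) <= 1) ->
  forall g, 0 <= g <= 1 -> ((c + ln q / eta)%:E <= l g w)%E.
Proof.
move=> hl pr eta0 q0 hyp g g01.
rewrite leNgt; apply/negP => H.
have [g1 [/andP[g10 g11] H1]] := @near_interior _ (fun g => l g w) _ _ (hl.2.1 w) g01 H.
have g101 : 0 <= g1 <= 1 by apply/andP; split; apply: ltW.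
have ff := @loss_fin _ _ hl pr g1 false g101 g11.
have ft := @loss_fin _ _ hl pr g1 true g101 g10.
have hs : superpred l (fine (l g1 false), fine (l g1 true)).
  split; first by rewrite -lee_fin fineK //; exact: hl.1.
  split; first by rewrite -lee_fin fineK //; exact: hl.1.
  by exists g1; split => //=; rewrite !fineK.
have := hyp _ _ hs; rewrite thresh //.
move: H1; case: w {hyp H} => /= h1 h2.
  by move: h1; rewrite -(fineK ft) lte_fin; lra.
by move: h1; rewrite -(fineK ff) lte_fin; lra.
Qed.

Lemma E_ff (R : realType) (eta a r : R) :
  expeR (eta%:E * subE0 a%:E r%:E) = (expR (eta * (a - r)))%:E.
Proof. by rewrite /subE0 /=. Qed.

Lemma E_fy (R : realType) (eta a : R) : 0 < eta ->
  expeR (eta%:E * subE0 a%:E +oo) = 0%E.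
Proof. by move=> e0; rewrite /subE0 /= gt0_muleNy. Qed.

Lemma E_yf (R : realType) (eta a : R) : 0 < eta ->
  expeR (eta%:E * subE0 +oo a%:E) = (+oo)%E.
Proof. by move=> e0; rewrite /subE0 /= gt0_muley. Qed.

Lemma key_C (R : realType) (l : R -> bool -> \bar R) (eta : R) :
  is_loss l -> proper_loss l -> mixable_loss eta l -> 0 < eta ->
  forall p g, 0 <= p <= 1 -> 0 <= g <= 1 ->
  (p%:E * expeR (eta%:E * subE0 (l p true) (l g true)) +
   (1 - p)%:E * expeR (eta%:E * subE0 (l p false) (l g false)) <= 1)%E.
Proof.
move=> hl pr mix eta0 p g p01 g01.
have l0 := hl.1.
have nb := hl.2.2.2 g g01.
have hpr := pr p g p01 g01.
have [p0|pn0] := eqVneq p 0.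
  subst p; rewrite mul0e add0e subr0 mul1e.
  move: hpr; rewrite !mul0e !add0e subr0 !mul1e => hpr.
  have f0 := @loss_fin _ _ hl pr 0 false p01 ltr01.
  move: hpr; rewrite -(fineK f0).
  have := l0 g false g01.
  case: (l g false) => [r| |] //= _.
    rewrite !lee_fin expR_le1 => h.
    by apply: mulr_ge0_le0; [exact: ltW|lra].
  by rewrite E_fy.
have [p1|pn1] := eqVneq p 1.
  subst p; rewrite subrr mul0e adde0 mul1e.
  move: hpr; rewrite subrr !mul0e !adde0 !mul1e => hpr.
  have f1 := @loss_fin _ _ hl pr 1 true p01 ltr01.
  move: hpr; rewrite -(fineK f1).
  have := l0 g true g01.
  case: (l g true) => [r| |] //= _.
    rewrite !lee_fin expR_le1 => h.
    by apply: mulr_ge0_le0; [exact: ltW|lra].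
  by rewrite E_fy.
case/andP: (p01) => p0' p1'.
have p0 : 0 < p by rewrite lt_neqAle eq_sym pn0.
have p1 : p < 1 by rewrite lt_neqAle pn1.
have fF := @loss_fin _ _ hl pr p false p01 p1.
have fT := @loss_fin _ _ hl pr p true p01 p0.
set u := fine (l p false); set v := fine (l p true).
have hu : l p false = u%:E by rewrite fineK.
have hv : l p true = v%:E by rewrite fineK.
have hB := @core_B _ l eta p u v hl pr mix eta0 (introT andP (conj p0 p1)) hu hv.
have lbF : ((u + ln (1 - p) / eta)%:E <= l g false)%E.
  apply: (@lower_bound _ l eta (1 - p) u false hl pr eta0) => //; first by lra.
  move=> x y hs /=; have := hB x y hs.
  have : 0 <= p * expR (eta * (v - y)) by apply: mulr_ge0; [lra|exact: expR_ge0].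
  lra.
have lbT : ((v + ln p / eta)%:E <= l g true)%E.
  apply: (@lower_bound _ l eta p v true hl pr eta0) => //.
  move=> x y hs /=; have := hB x y hs.
  have : 0 <= (1 - p) * expR (eta * (u - x)) by apply: mulr_ge0; [lra|exact: expR_ge0].
  lra.
rewrite hu hv.
have gf0 := l0 g false g01; have gt0 := l0 g true g01.
case EF: (l g false) gf0 lbF nb => [r0| |] //; case ET: (l g true) gt0 lbT => [r1| |] // h1 lb1 h0 lb0 nb.
- rewrite !E_ff -!EFinM -EFinD lee_fin addrC; apply: hB.
  split; first by rewrite -lee_fin.
  split; first by rewrite -lee_fin.
  by exists g; split => //; rewrite EF ET.
- have q0 : 0 < 1 - p by lra.
  rewrite E_ff E_fy // mule0 add0e -EFinM lee_fin (@thresh _ eta (1 - p) u r0 eta0 q0).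
  by rewrite -lee_fin.
- rewrite E_ff E_fy // mule0 adde0 -EFinM lee_fin (@thresh _ eta p v r1 eta0 p0).
  by rewrite -lee_fin.
- by exfalso; apply: nb.
Qed.


Lemma Qnm_ext (R : realType) (N M : nat)
  (lam : 'I_M -> R -> bool -> \bar R) (eta : 'I_M -> R) (gam : nat -> 'I_N -> R)
  (pi pi' : nat -> R) (om om' : nat -> bool) n m k :
  (forall s, (s <= k)%N -> pi s = pi' s /\ om s = om' s) ->
  Qnm lam eta gam pi om n m k = Qnm lam eta gam pi' om' n m k.
Proof.
elim: k => [//|k IH] h /=.
rewrite IH; last by move=> s sk; apply: h; exact: leqW.
by have [-> ->] := h k.+1 (leqnn _).
Qed.

Lemma Qnm_ge0 (R : realType) (N M : nat)
  (lam : 'I_M -> R -> bool -> \bar R) (eta : 'I_M -> R) (gam : nat -> 'I_N -> R)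
  (pi : nat -> R) (om : nat -> bool) n m k :
  (0 <= Qnm lam eta gam pi om n m k)%E.
Proof.
elim: k => [|k IH] /=; first by rewrite lee_fin.
by apply: mule_ge0 => //; exact: expeR_ge0.
Qed.

Lemma Qnm_L (R : realType) (N M : nat)
  (lam : 'I_M -> R -> bool -> \bar R) (eta : 'I_M -> R) (gam : nat -> 'I_N -> R)
  (pi : nat -> R) (om : nat -> bool) n m :
  0 < eta m ->
  (forall s, (1 <= s)%N -> (0 <= lam m (pi s) (om s))%E) ->
  forall k, Lexpert lam gam om n m k \is a fin_num ->
  Qnm lam eta gam pi om n m k =
  expeR ((eta m)%:E * (Llearner lam pi om m k - Lexpert lam gam om n m k)).
Proof.
move=> e0 hpos; elim => [|k IH] hf.
  by rewrite /Llearner /Lexpert !big_geq //= subr0 mulr0 expR0.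
have eLl : Llearner lam pi om m k.+1 = (Llearner lam pi om m k + lam m (pi k.+1) (om k.+1))%E.
  by rewrite /Llearner big_nat_recr.
have eLe : Lexpert lam gam om n m k.+1 = (Lexpert lam gam om n m k + lam m (gam k.+1 n) (om k.+1))%E.
  by rewrite /Lexpert big_nat_recr.
move: hf; rewrite eLe fin_numD => /andP[f1 f2].
rewrite /= IH // eLl.
have Ll0 : (0 <= Llearner lam pi om m k)%E.
  by rewrite /Llearner big_nat_cond; apply: sume_ge0 => s /andP[/andP[s1 _] _]; exact: hpos.
have a0 := hpos k.+1 isT.
move: (Llearner lam pi om m k) (lam m (pi k.+1) (om k.+1)) (Lexpert lam gam om n m k)
  (lam m (gam k.+1 n) (om k.+1)) Ll0 a0 f1 f2 => [x| |] [a| |] [y| |] [b| |] //= _ _ _ _.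
- by rewrite -EFinM -expRD; congr (_%:E); congr expR; ring.
- by rewrite /subE0 /= !gt0_muley ?lte_fin ?expR_gt0.
- by rewrite /subE0 /= !addye // !gt0_muley ?lte_fin //= ?gt0_mulye ?lte_fin ?expR_gt0.
- by rewrite /subE0 /= !addye // !gt0_muley ?lte_fin //= ?gt0_mulye ?lte_fin ?expR_gt0.
Qed.


Lemma dist2 (R : realType) (I : Type) (s : seq I) (F G : I -> \bar R) (a b : \bar R) :
  (forall i, (0 <= F i)%E) -> (forall i, (0 <= G i)%E) ->
  (a * (\sum_(i <- s) F i) + b * (\sum_(i <- s) G i) = \sum_(i <- s) (a * F i + b * G i))%E.
Proof. by move=> F0 G0; rewrite !ge0_sume_distrr // big_split. Qed.

Theorem corollary3 (R : realType) (N M : nat)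
  (lam : 'I_M -> R -> bool -> \bar R) (eta : 'I_M -> R)
  (Hloss : forall m, is_loss (lam m))
  (Hproper : forall m, proper_loss (lam m))
  (Heta : forall m, 0 < eta m)
  (Hmix : forall m, mixable_loss (eta m) (lam m))
  (gam : nat -> 'I_N -> R) (pi : nat -> R) (om : nat -> bool)
  (Hgam : forall t n, (1 <= t)%N -> 0 <= gam t n <= 1)
  (Hlearner : forall t, (1 <= t)%N -> follows_DF lam eta gam pi om t) :
  forall t (n : 'I_N) (m : 'I_M),
    (Llearner lam pi om m t <=
     Lexpert lam gam om n m t + (ln (M * N)%:R / eta m)%:E)%E.
Proof.
move=> t n m.
have M0 : (0 < M)%N := leq_ltn_trans (leq0n m) (ltn_ord m).
have N0 : (0 < N)%N := leq_ltn_trans (leq0n n) (ltn_ord n).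
have MN0 : (0 < (M * N)%:R :> R) by rewrite ltr0n muln_gt0 M0 N0.
set c : R := ((M * N)%:R)^-1.
have c0 : 0 < c by rewrite invr_gt0.
have cfin : (c%:E \is a fin_num)%E by [].
have c0E : (0%R < c%:E)%E by rewrite lte_fin.
have pi01 : forall s, (1 <= s)%N -> 0 <= pi s <= 1 by move=> s hs; case: (Hlearner s hs).
have inv : forall t, (Qtot lam eta gam pi om t <= 1)%E.
  elim => [|t' IH].
    rewrite /Qtot /=.
    under eq_bigr do rewrite sumEFin sumr_const card_ord.
    rewrite sumEFin sumr_const card_ord -EFinM lee_fin -[M%:R *+ N]mulr_natr -natrM mulVf //.
    by rewrite gt_eqF.
  set q := fun n m => Qnm lam eta gam pi om n m t'.
  set S := (\sum_(n < N) \sum_(m < M) q n m)%E.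
  set T := fun p w => (\sum_(n < N) \sum_(m < M) (q n m *
     expeR ((eta m)%:E * subE0 (lam m p w) (lam m (gam t'.+1 n) w))))%E.
  have Qt : Qtot lam eta gam pi om t'.+1 = (c%:E * T (pi t'.+1) (om t'.+1))%E by [].
  have Qt' : Qtot lam eta gam pi om t' = (c%:E * S)%E by [].
  have q0 : forall n m, (0 <= q n m)%E by move=> *; exact: Qnm_ge0.
  have S0 : (0 <= S)%E by apply: sume_ge0 => *; apply: sume_ge0 => *.
  have T0 : forall p w, (0 <= T p w)%E.
    by move=> p w; apply: sume_ge0 => *; apply: sume_ge0 => *; apply: mule_ge0 => //; exact: expeR_ge0.
  have fE : forall p w, fdef lam eta gam pi om t'.+1 p w = subE0 (c%:E * T p w) (c%:E * S).
    move=> p w; rewrite /fdef /Qtot /=; congr subE0; congr (_ * _)%E.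
    apply: eq_bigr => n' _; apply: eq_bigr => m' _.
    rewrite eqxx; congr (_ * _)%E; rewrite /q; symmetry; apply: Qnm_ext => s hs.
    have -> : (s == t'.+1) = false by apply/negbTE; rewrite neq_ltn ltnS hs.
    by [].
  rewrite Qt' in IH.
  case ES : S IH S0 => [s| |] //= IH s0; last first.
    by move: IH; rewrite gt0_muley // leye_eq.
  have comb : forall p, 0 <= p <= 1 -> (p%:E * T p true + (1 - p)%:E * T p false <= S)%E.
    move=> p p01.
    have hp : (0 <= p%:E)%E by rewrite lee_fin; case/andP: p01.
    have hq : (0 <= (1 - p)%:E)%E by rewrite lee_fin subr_ge0; case/andP: p01.
    rewrite /T dist2; last 2 first.
    - by move=> i; apply: sume_ge0 => j _; apply: mule_ge0 => //; exact: expeR_ge0.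
    - by move=> i; apply: sume_ge0 => j _; apply: mule_ge0 => //; exact: expeR_ge0.
    rewrite /S; apply: lee_sum => n' _.
    rewrite dist2; last 2 first.
    - by move=> j; apply: mule_ge0 => //; exact: expeR_ge0.
    - by move=> j; apply: mule_ge0 => //; exact: expeR_ge0.
    apply: lee_sum => m' _.
    rewrite !(muleCA _ (q n' m')) -ge0_muleDr; last 2 first.
    - by apply: mule_ge0 => //; exact: expeR_ge0.
    - by apply: mule_ge0 => //; exact: expeR_ge0.
    rewrite -[X in (_ <= X)%E]mule1; apply: lee_wpmul2l => //.
    have := (@key_C _ _ _ (Hloss m') (Hproper m') (Hmix m') (Heta m') p (gam t'.+1 n') p01 (Hgam t'.+1 n' isT)). exact.
  have F : forall p w, (fdef lam eta gam pi om t'.+1 p w <= 0)%E = (T p w <= s%:E)%E.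
    move=> p w; rewrite fE /subE0 ES -EFinM /= andbF EFinN sube_le0 EFinM.
    exact: (lee_pmul2l cfin c0E).
  rewrite Qt; apply: (le_trans _ IH); apply: lee_wpmul2l; first exact: ltW.
  have comb' : forall p, 0 <= p <= 1 -> (p%:E * T p true + (1 - p)%:E * T p false <= s%:E)%E.
    by move=> p p01; rewrite -ES; exact: comb.
  have [p01 hc] := Hlearner t'.+1 isT.
  move: hc; rewrite !F.
  case: ifP => [h0 ->|_].
    case: (om t'.+1); first exact: h0.
    have := comb' 0; rewrite mul0e add0e subr0 mul1e; apply.
    by rewrite lexx ler01.
  case: ifP => [h1 ->|_ heq].
    case: (om t'.+1); last exact: h1.
    have := comb' 1; rewrite subrr mul0e adde0 mul1e; apply.
    by rewrite lexx ler01.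
  move: heq; rewrite !fE /subE0 ES -EFinM /= !andbF.
  move/(congr1 (fun z => z + (c * s)%:E)%E); rewrite !EFinN !subeK //.
  move/(congr1 (fun z => (c^-1)%:E * z)%E); rewrite !muleA -EFinM mulVf ?gt_eqF // !mul1e => eqT.
  have := comb' _ p01; rewrite eqT -ge0_muleDl ?lee_fin ?subr_ge0; last 2 first.
  - by case/andP: p01.
  - by case/andP: p01.
  by rewrite -EFinD addrC subrK mul1e => h; case: (om t'.+1); rewrite ?eqT.
have single : (Qnm lam eta gam pi om n m t <=
    \sum_(n' < N) \sum_(m' < M) Qnm lam eta gam pi om n' m' t)%E.
  rewrite (bigD1 n) //= (bigD1 m) //= -addeA; apply: leeDl; apply: adde_ge0.
  - by apply: sume_ge0 => *; exact: Qnm_ge0.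
  - by apply: sume_ge0 => *; apply: sume_ge0 => *; exact: Qnm_ge0.
have Qb : (Qnm lam eta gam pi om n m t <= ((M * N)%:R)%:E)%E.
  have := inv t; rewrite /Qtot => h0.
  have hQ : (c%:E * Qnm lam eta gam pi om n m t <= 1)%E.
    apply: le_trans; last exact: h0.
    by apply: lee_wpmul2l => //; exact: ltW.
  move: hQ (@Qnm_ge0 _ _ _ lam eta gam pi om n m t).
  case: (Qnm lam eta gam pi om n m t) => [r| |] //.
  - rewrite -EFinM !lee_fin /c mulrC ler_pdivrMr // mul1r => hh _; exact: hh.
  - by rewrite gt0_muley // leye_eq.
have hpos : forall s, (1 <= s)%N -> (0 <= lam m (pi s) (om s))%E.
  by move=> s hs; apply: (Hloss m).1; exact: pi01.
have Le0 : (0 <= Lexpert lam gam om n m t)%E.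
  rewrite /Lexpert big_nat_cond; apply: sume_ge0 => s /andP[/andP[s1 _] _].
  by apply: (Hloss m).1; exact: Hgam.
have Ll0 : (0 <= Llearner lam pi om m t)%E.
  by rewrite /Llearner big_nat_cond; apply: sume_ge0 => s /andP[/andP[s1 _] _]; exact: hpos.
case: (boolP (Lexpert lam gam om n m t \is a fin_num)) => hf; last first.
  move: hf Le0; case: (Lexpert lam gam om n m t) => [x| |] //= _ _.
  by rewrite leey.
move: Qb; rewrite (@Qnm_L _ _ _ lam eta gam pi om n m (Heta m) hpos t hf).
move: hf Ll0; case: (Lexpert lam gam om n m t) => [l'| |] // _.
case: (Llearner lam pi om m t) => [r| |] // _ /=.
  rewrite lee_fin -EFinD lee_fin => h.
  have h' : eta m * (r - l') <= ln (M * N)%:R.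
    by rewrite -ler_ln ?posrE ?expR_gt0 // expRK in h.
  have : (r - l') <= ln (M * N)%:R / eta m by rewrite ler_pdivlMr // mulrC.
  lra.
by rewrite gt0_muley ?lte_fin // leye_eq.
Qed.
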